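(* For all multidistributions $\mu,\nu$ on configurations, real $w\ge0$, expectation $f$ and $c\in\{\mathit{true},\mathit{false}\}$: if $\mu\Rightarrow_w\nu$ (one step of the lifted relation on multidistributions), then \[ \mathbb{E}_\mu(e_c(f)) \;\ge\; [c]\cdot w + \mathbb{E}_\nu(e_c(f)). \]
   Context: Let $\mathrm{Var}$ be a finite set of integer-valued variables and $\Sigma = \mathrm{Var}\to\mathbb{Z}$ the set of stores; $\sigma[x\mapsto i]$ is the store updated at $x$. Boolean expressions $\varphi$ are evaluated on stores ($\sigma\models\varphi$). A distribution expression $d$ assigns to each store $\sigma$ a probability distribution $d(\sigma)$ on $\mathbb{Z}$. Commands: $C,D ::= \mathtt{skip} \mid \mathtt{tick}(r) \mid \mathtt{halt} \mid x :\approx d \mid \mathtt{if}_{[\psi]}(\varphi)\{C\}\{D\} \mid \mathtt{while}_{[\psi]}(\varphi)\{C\} \mid C \,\square\, D \mid C \oplus_p D \mid C;D$, with $r$ a nonnegative rational, $p\in[0,1]$. Expectations are functions $f:\Sigma\to[0,\infty]$, with pointwise operations, $\mathbf{r}$ the constant $r$, $[\varphi](\sigma)\in\{0,1\}$ the indicator, $[c]=1$ if $c=\mathit{true}$ and $0$ otherwise, $0\cdot\infty=0$. Transformer $\mathsf{et}_c$: $\mathsf{et}_c[\mathtt{skip}](f)=f$; $\mathsf{et}_c[\mathtt{tick}(r)](f)=[c]\cdot\mathbf{r}+f$; $\mathsf{et}_c[\mathtt{halt}](f)=\mathbf{0}$; $\mathsf{et}_c[x:\approx d](f)=\lambda\sigma.\sum_{i}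 d(\sigma)(i)\, f(\sigma[x\mapsto i])$; $\mathsf{et}_c[\mathtt{if}_{[\psi]}(\varphi)\{C\}\{D\}](f)=[\psi\wedge\varphi]\cdot\mathsf{et}_c[C](f)+[\psi\wedge\neg\varphi]\cdot\mathsf{et}_c[D](f)$; $\mathsf{et}_c[\mathtt{while}_{[\psi]}(\varphi)\{C\}](f)=\mathrm{lfp}\,F.\ [\psi\wedge\varphi]\cdot\mathsf{et}_c[C](F)+[\psi\wedge\neg\varphi]\cdot f$ (least fixed point, pointwise order); $\mathsf{et}_c[C\,\square\,D](f)=\max(\mathsf{et}_c[C](f),\mathsf{et}_c[D](f))$; $\mathsf{et}_c[C\oplus_p D](f)=\mathbf{p}\cdot\mathsf{et}_c[C](f)+\mathbf{(1-p)}\cdot\mathsf{et}_c[D](f)$; $\mathsf{et}_c[C;D](f)=\mathsf{et}_c[C](\mathsf{et}_c[D](f))$. Configurations: $\mathrm{Conf}=(\mathrm{Cmd}\times\Sigma)\cup\Sigma\cup\{\bot\}$; an active configuration is written $\langle C,\sigma\rangle$. A multidistribution on a set $A$ is a countable multiset $\mu$ of pairs $q:a$ with $a\in A$, $0<q\le1$, and $\sum_{q:a\in\mu}q\le1$; $\mathbb{E}_\mu(g)=\sum_{q:a\in\mu}q\cdot g(a)$ (with multiplicity). For $0<p\le1$, $p\cdot\{q_i:a_i\}_i=\{p q_i:a_i\}_i$, and for a countable family with $p_i>0$, $\sum_ip_i\le1$, $\biguplus_i p_i\cdot\mu_i$ is the multiset union of the $p_i\cdot\mu_i$. For $h:A\to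 B$, $\overline h(\{q_i:a_i\}_i)=\{q_i:h(a_i)\}_i$. A configuration $\gamma$ is identified with $\{1:\gamma\}$; entries with probability $0$ are omitted. The one-step relation $\gamma\to_w\mu$ is the least relation closed under: $\langle\mathtt{skip},\sigma\rangle\to_0\sigma$; $\langle\mathtt{tick}(r),\sigma\rangle\to_r\sigma$; $\langle\mathtt{halt},\sigma\rangle\to_0\bot$; $\langle x:\approx d,\sigma\rangle\to_0\{d(\sigma)(i):\sigma[x\mapsto i]\mid d(\sigma)(i)>0\}$; $\langle\mathtt{if}_{[\psi]}(\varphi)\{C\}\{D\},\sigma\rangle\to_0\langle C,\sigma\rangle$ if $\sigma\models\psi\wedge\varphi$, $\to_0\langle D,\sigma\rangle$ if $\sigma\models\psi\wedge\neg\varphi$, $\to_0\bot$ if $\sigma\models\neg\psi$; $\langle\mathtt{while}_{[\psi]}(\varphi)\{C\},\sigma\rangle\to_0\langle C;\mathtt{while}_{[\psi]}(\varphi)\{C\},\sigma\rangle$ if $\sigma\models\psi\wedge\varphi$, $\to_0\sigma$ if $\sigma\models\psi\wedge\neg\varphi$, $\to_0\bot$ if $\sigma\models\neg\psi$; $\langle C\,\square\,D,\sigma\rangle\to_0\langle C,\sigma\rangle$ and $\to_0\langle D,\sigma\rangle$; $\langle C\oplus_pD,\sigma\rangle\to_0\{p:\langle C,\sigma\rangle,1-p:\langle D,\sigma\rangle\}$; if $\langle C,\sigma\rangle\to_r\mu$ then $\langle C;D,\sigma\rangle\to_r\overline{\kappa_D}(\mu)$, where $\kappa_D(\langle C',\sigma'\rangle)=\langle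 C';D,\sigma'\rangle$, $\kappa_D(\sigma')=\langle D,\sigma'\rangle$, $\kappa_D(\bot)=\bot$. The lifted relation $\mu\Rightarrow_w\nu$ on multidistributions is the least relation with: $\mu\Rightarrow_0\mu$; $\{1:\gamma\}\Rightarrow_w\mu$ whenever $\gamma\to_w\mu$; and if $\mu_i\Rightarrow_{w_i}\nu_i$ for all $i$ in a countable index set $I$, $p_i>0$, $\sum_ip_i\le1$, then $\biguplus_ip_i\cdot\mu_i\Rightarrow_{w}\biguplus_ip_i\cdot\nu_i$ with $w=\sum_ip_iw_i$. For an expectation $f$, $e_c(f):\mathrm{Conf}\to[0,\infty]$ is defined by $e_c(f)(\langle C,\sigma\rangle)=\mathsf{et}_c[C](f)(\sigma)$, $e_c(f)(\sigma)=f(\sigma)$, $e_c(f)(\bot)=0$. *)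

(* Defs.v *)
From HB Require Import structures.
From mathcomp Require Import all_boot all_order all_algebra.
From mathcomp Require Import all_classical all_reals.
From mathcomp Require Import ereal esum.

Set Implicit Arguments.
Unset Strict Implicit.
Unset Printing Implicit Defensive.

Import Order.TTheory GRing.Theory Num.Theory.
Local Open Scope classical_set_scope.
Local Open Scope ring_scope.

Section Lang.
Variables (R : realType) (V : finType).

Definition store := V -> int.
Definition upd (s : store) (x : V) (i : int) : store :=
  fun y => if y == x then i else s y.

(* Boolean expressions, represented by their semantics sigma |= phi *)
Definition bexp := store -> bool.

Inductive cmd : Type :=
| Skip
| Tick (r : rat) of (0 <= r)
| Halt
| Assign (x : V) (d : store -> int -> R)
    of (forall s i, 0 <= d s i)
     & (forall s, (\esum_(i in [set: int]) (d s i)%:E = 1)%E)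
| If (psi phi : bexp) (C D : cmd)
| While (psi phi : bexp) (C : cmd)
| NDet (C D : cmd)
| Prob (C : cmd) (p : R) (D : cmd) of (0 <= p <= 1)
| Seq (C D : cmd).

(* expectations: functions store -> [0, oo] (nonnegativity is a hypothesis
   wherever an expectation is required) *)
Definition expect := store -> \bar R.

Definition ind (b : bool) : R := if b then 1 else 0.

(* least fixed point in the pointwise order on expectations
   (Knaster--Tarski: pointwise meet of all pre-fixed points) *)
Definition lfp (Phi : expect -> expect) : expect :=
  fun s => ereal_inf [set g s | g in
     [set g : expect | (forall t, (0 <= g t)%E) /\ (forall t, (Phi g t <= g t)%E)]].

Fixpoint et (c : bool) (C : cmd) (f : expect) {struct C} : expect :=
  match C with
  | Skip => f
  | Tick r _ => fun s => ((ind c * ratr r)%:E + f s)%E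
  | Halt => fun _ => 0%E
  | Assign x d _ _ =>
      fun s => (\esum_(i in [set: int]) ((d s i)%:E * f (upd s x i)))%E
  | If psi phi C1 D1 =>
      fun s => ((ind (psi s && phi s))%:E * et c C1 f s
                + (ind (psi s && ~~ phi s))%:E * et c D1 f s)%E
  | While psi phi C1 =>
      lfp (fun F s => ((ind (psi s && phi s))%:E * et c C1 F s
                       + (ind (psi s && ~~ phi s))%:E * f s)%E)
  | NDet C1 D1 => fun s => Order.max (et c C1 f s) (et c D1 f s)
  | Prob C1 p D1 _ => fun s => (p%:E * et c C1 f s + (1 - p)%:E * et c D1 f s)%E
  | Seq C1 D1 => et c C1 (et c D1 f)
  end.

Inductive conf : Type :=
| Active (C : cmd) (s : store)
| Term (s : store)
| Bot.

(* multidistributions: countable multisets of pairs q : a, 0 < q <= 1,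
   total mass <= 1; represented by a countable index type (multiplicity
   = number of indices carrying the pair). *)
Record multidist := MDist {
  mI : countType;
  mq : mI -> R;
  mc : mI -> conf;
  mq_gt0 : forall i, 0 < mq i;
  mq_le1 : forall i, mq i <= 1;
  msum_le1 : (\esum_(i in [set: mI]) (mq i)%:E <= 1)%E }.
Arguments mq : clear implicits.
Arguments mc : clear implicits.

Definition Emd (mu : multidist) (g : conf -> \bar R) : \bar R :=
  (\esum_(i in [set: mI mu]) ((mq mu i)%:E * g (mc mu i)))%E.

(* mu is (as a multiset) the family {q j : a j | j in J} *)
Definition md_is (mu : multidist) (J : Type) (q : J -> R) (a : J -> conf) : Prop :=
  exists e : mI mu -> J, bijective e /\
    forall k, mq mu k = q (e k) /\ mc mu k = a (e k).

Definition md_dirac (mu : multidist) (g : conf) : Prop :=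
  md_is mu (fun _ : unit => 1) (fun _ => g).

Definition kappa (D : cmd) (g : conf) : conf :=
  match g with
  | Active C s => Active (Seq C D) s
  | Term s => Active D s
  | Bot => Bot
  end.

Inductive step : conf -> R -> multidist -> Prop :=
| st_skip s mu : md_dirac mu (Term s) -> step (Active Skip s) 0 mu
| st_tick r h s mu : md_dirac mu (Term s) -> step (Active (@Tick r h) s) (ratr r) mu
| st_halt s mu : md_dirac mu Bot -> step (Active Halt s) 0 mu
| st_assign x d h1 h2 s mu :
    md_is mu (fun i : {i : int | 0 < d s i} => d s (sval i))
             (fun i => Term (upd s x (sval i))) ->
    step (Active (@Assign x d h1 h2) s) 0 mu
| st_if_t psi phi C D s mu : psi s && phi s ->
    md_dirac mu (Active C s) -> step (Active (If psi phi C D) s) 0 mu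
| st_if_f psi phi C D s mu : psi s && ~~ phi s ->
    md_dirac mu (Active D s) -> step (Active (If psi phi C D) s) 0 mu
| st_if_bot psi phi C D s mu : ~~ psi s ->
    md_dirac mu Bot -> step (Active (If psi phi C D) s) 0 mu
| st_while_t psi phi C s mu : psi s && phi s ->
    md_dirac mu (Active (Seq C (While psi phi C)) s) ->
    step (Active (While psi phi C) s) 0 mu
| st_while_f psi phi C s mu : psi s && ~~ phi s ->
    md_dirac mu (Term s) -> step (Active (While psi phi C) s) 0 mu
| st_while_bot psi phi C s mu : ~~ psi s ->
    md_dirac mu Bot -> step (Active (While psi phi C) s) 0 mu
| st_ndet_l C D s mu : md_dirac mu (Active C s) -> step (Active (NDet C D) s) 0 mu
| st_ndet_r C D s mu : md_dirac mu (Active D s) -> step (Active (NDet C D) s) 0 mu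
| st_prob C p D h s mu :
    md_is mu (fun b : {b : bool | 0 < (if b then p else 1 - p)} =>
                if sval b then p else 1 - p)
             (fun b => Active (if sval b then C else D) s) ->
    step (Active (@Prob C p D h) s) 0 mu
| st_seq C D s r mu' mu : step (Active C s) r mu' ->
    md_is mu (mq mu') (fun k => kappa D (mc mu' k)) ->
    step (Active (Seq C D) s) r mu.

Inductive lstep : multidist -> R -> multidist -> Prop :=
| ls_refl mu : lstep mu 0 mu
| ls_step g w mu nu : md_dirac mu g -> step g w nu -> lstep mu w nu
| ls_union (J : countType) (p : J -> R) (mus nus : J -> multidist) (ws : J -> R)
    (w : R) (mu nu : multidist) :
    (forall j, lstep (mus j) (ws j) (nus j)) ->
    (forall j, 0 < p j) ->
    (\esum_(j in [set: J]) (p j)%:E <= 1)%E ->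
    w%:E = (\esum_(j in [set: J]) (p j * ws j)%:E)%E ->
    md_is mu (fun jk : {j : J & mI (mus j)} => p (tag jk) * mq (mus (tag jk)) (tagged jk))
             (fun jk => mc (mus (tag jk)) (tagged jk)) ->
    md_is nu (fun jk : {j : J & mI (nus j)} => p (tag jk) * mq (nus (tag jk)) (tagged jk))
             (fun jk => mc (nus (tag jk)) (tagged jk)) ->
    lstep mu w nu.

Definition ec (c : bool) (f : expect) (g : conf) : \bar R :=
  match g with
  | Active C s => et c C f s
  | Term s => f s
  | Bot => 0%E
  end.

End Lang.

(* Main.v *)
Require Import Defs.
From mathcomp Require Import all_boot all_order all_algebra.
From mathcomp Require Import all_classical all_reals.
From mathcomp Require Import ereal esum.
Import Order.TTheory GRing.Theory Num.Theory.

Set Implicit Arguments.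
Unset Strict Implicit.
Unset Printing Implicit Defensive.
Local Open Scope classical_set_scope.
Local Open Scope ring_scope.

Section Proofs.
Variables (R : realType) (V : finType).
Local Notation expect := (expect R V).
Local Notation cmd := (cmd R V).

Lemma ind_ge0 b : (0 <= @ind R b)%R.
Proof. by case: b; rewrite /ind. Qed.

Lemma lfp_ge0 (Phi : expect -> expect) s : (0 <= lfp Phi s)%E.
Proof.
apply: le_ereal_inf_tmp => _ [g [g0 _] <-]; exact: g0.
Qed.

Lemma lfp_unfold (Phi : expect -> expect) :
  (forall F G, (forall s, 0 <= F s)%E -> (forall s, F s <= G s)%E ->
     forall s, (Phi F s <= Phi G s)%E) ->
  forall s, (Phi (lfp Phi) s <= lfp Phi s)%E.
Proof.
move=> mono s; apply: le_ereal_inf_tmp => _ [g [g0 gpre] <-].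
apply: le_trans (gpre s); apply: mono; first exact: lfp_ge0.
move=> t; apply: ereal_inf_lbound; by exists g.
Qed.

Lemma et_ge0 c (C : cmd) (f : expect) : (forall s, 0 <= f s)%E ->
  forall s, (0 <= et c C f s)%E.
Proof.
elim: C f => /=.
- by [].
- move=> r hr f f0 s; apply: adde_ge0 => //; rewrite lee_fin mulr_ge0 ?ind_ge0 ?ler0q //.
- by [].
- move=> x d h1 h2 f f0 s; apply: esum_ge0 => i _; apply: mule_ge0 => //; rewrite lee_fin; exact: h1.
- move=> psi phi C IHC D IHD f f0 s; apply: adde_ge0; apply: mule_ge0;
    rewrite ?lee_fin ?ind_ge0 ?IHC ?IHD //.
- move=> psi phi C IHC f f0 s; exact: lfp_ge0.
- move=> C IHC D IHD f f0 s; rewrite le_max IHC //.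
- move=> C IHC p D IHD /andP[p0 p1] f f0 s; apply: adde_ge0; apply: mule_ge0;
    rewrite ?lee_fin ?subr_ge0 ?IHC ?IHD //.
- move=> C IHC D IHD f f0 s; apply: IHC; exact: IHD.
Qed.

Lemma et_mono c (C : cmd) (f g : expect) : (forall s, 0 <= f s)%E ->
  (forall s, f s <= g s)%E -> forall s, (et c C f s <= et c C g s)%E.
Proof.
elim: C f g => /=.
- by [].
- move=> r hr f g f0 fg s; exact: leeD2l.
- by [].
- move=> x d h1 h2 f g f0 fg s; apply: le_esum => i _; apply: lee_wpmul2l => //; rewrite lee_fin; exact: h1.
- move=> psi phi C IHC D IHD f g f0 fg s; apply: leeD; apply: lee_wpmul2l;
    rewrite ?lee_fin ?ind_ge0 ?IHC ?IHD //.
- move=> psi phi C IHC f g f0 fg s; apply: ereal_inf_le_tmp.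
  move=> _ [h [h0 hpre] <-]; exists h => //; split => // t.
  apply: le_trans (hpre t); apply: leeD2l; apply: lee_wpmul2l; rewrite ?lee_fin ?ind_ge0 //.
- move=> C IHC D IHD f g f0 fg s; apply: le_max2; [exact: IHC|exact: IHD].
- move=> C IHC p D IHD /andP[p0 p1] f g f0 fg s; apply: leeD; apply: lee_wpmul2l;
    rewrite ?lee_fin ?subr_ge0 ?IHC ?IHD //.
- move=> C IHC D IHD f g f0 fg s; apply: IHC; [exact: et_ge0| exact: IHD].
Qed.

End Proofs.


Section Esum.
Variable (R : realType).

Lemma fsumZl (T : choiceType) (S A : set T) (a : T -> \bar R) (r : R) :
  finite_set A -> A `<=` S -> (forall i, S i -> 0 <= a i)%E ->
  (r%:E * \sum_(i \in A) a i = \sum_(i \in A) (r%:E * a i))%E.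
Proof.
move=> finA AS a0; rewrite !fsbig_finite // big_seq [in RHS]big_seq ge0_sume_distrr //.
by move=> i; rewrite in_fset_set // inE => /AS /a0.
Qed.

Lemma esumZl (T : choiceType) (S : set T) (a : T -> \bar R) (r : R) :
  0 <= r -> (forall i, S i -> 0 <= a i)%E ->
  (\esum_(i in S) (r%:E * a i) = r%:E * \esum_(i in S) a i)%E.
Proof.
move=> r0 a0; rewrite /esum -ereal_supZl //; last first.
  by apply/set0P; exists 0%E; exists set0; [exact: fsets_set0|rewrite fsbig_set0].
congr ereal_sup; apply/seteqP; split => x /=.
- move=> [A [finA AS] <-]; exists (\sum_(i \in A) a i)%E; first by exists A.
  by rewrite (fsumZl _ finA AS a0).
- move=> [_ [A [finA AS] <-] <-]; exists A => //.
  by rewrite (fsumZl _ finA AS a0).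
Qed.

Lemma esum_sig (T : choiceType) (P : pred T) (F : T -> \bar R) :
  (forall i, ~~ P i -> F i = 0%E) ->
  (\esum_(j in [set: {i : T | P i}]) F (sval j) = \esum_(i in [set: T]) F i)%E.
Proof.
move=> F0.
rewrite -(reindex_esum [set: {i : T | P i}] [set i | P i] sval F); last first.
  split.
  - by move=> [i Pi] _ /=.
  - by move=> [i Pi] [j Pj] _ _ /= eij; apply/val_inj.
  - by move=> i /= Pi; exists (exist _ i Pi).
rewrite esum_mkcond; apply: eq_esum => i _.
case: ifP => // H; symmetry; apply: F0; apply/negP => Pi; move: H; rewrite mem_set //.
Qed.

Lemma esum_sigT (J : choiceType) (T_ : J -> choiceType) (g : {j : J & T_ j} -> \bar R) :
  (forall k, 0 <= g k)%E ->
  (\esum_(k in [set: {j : J & T_ j}]) g k =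
   \esum_(j in [set: J]) \esum_(x in [set: T_ j]) g (Tagged T_ x))%E.
Proof.
move=> g0.
transitivity (\esum_(j in [set: J]) \esum_(k in [set k : {j : J & T_ j} | tag k = j]) g k)%E;
  last first.
  apply: eq_esum => j _.
  rewrite (reindex_esum [set: T_ j] [set k | tag k = j] (fun x => Tagged T_ x)) //.
  split.
  - by move=> x _ /=.
  - by move=> x y _ _; exact: eq_from_Tagged.
  - move=> [j' x] /= <-; by exists x.
rewrite esum_esum //.
rewrite (reindex_esum ([set: J] `*`` (fun j => [set k : {j : J & T_ j} | tag k = j]))
   [set: {j : J & T_ j}] snd) //.
split.
- by [].
- move=> [j1 k1] [j2 k2] /set_mem [_ /= h1] /set_mem [_ /= h2] /= e; subst; by [].
- move=> k _; exists (tag k, k) => //.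
Qed.

End Esum.


Section MD.
Variables (R : realType) (V : finType).
Local Notation expect := (expect R V).
Local Notation cmd := (cmd R V).
Local Notation conf := (conf R V).
Local Notation multidist := (multidist R V).

Lemma Emd_is (mu : multidist) (J : choiceType) (q : J -> R) (a : J -> conf) g :
  md_is mu q a -> Emd mu g = (\esum_(j in [set: J]) ((q j)%:E * g (a j)))%E.
Proof.
move=> [e [be He]]; rewrite /Emd (reindex_esum [set: mI mu] [set: J] e).
  by apply: eq_esum => k _; case: (He k) => -> ->.
by rewrite setTT_bijective.
Qed.

Lemma Emd_dirac (mu : multidist) g h : (0 <= h g)%E -> md_dirac mu g -> Emd mu h = h g.
Proof.
move=> h0 /(@Emd_is _ unit) ->.
rewrite (_ : [set: unit] = [set tt]); last by apply/seteqP; split => -[].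
by rewrite esum_set1 ?mul1e // mul1e.
Qed.

Lemma ec_ge0 c (f : expect) g : (forall s, 0 <= f s)%E -> (0 <= ec c f g)%E.
Proof. by move=> f0; case: g => //= C s; apply: et_ge0. Qed.

Lemma Emd_ge0 (mu : multidist) g : (forall x, 0 <= g x)%E -> (0 <= Emd mu g)%E.
Proof.
move=> g0; apply: esum_ge0 => i _; apply: mule_ge0 => //.
by rewrite lee_fin ltW // mq_gt0.
Qed.

Lemma step_w_ge0 g w nu : @step R V g w nu -> 0 <= w.
Proof. by elim => //= *; rewrite ler0q. Qed.

End MD.


Section St.
Variables (R : realType) (V : finType).
Local Notation expect := (expect R V).
Local Notation cmd := (cmd R V).
Local Notation conf := (conf R V).
Local Notation multidist := (multidist R V).

Lemma step_sound c g w (nu : multidist) : step g w nu ->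
  forall f : expect, (forall s, 0 <= f s)%E ->
  ((@ind R c * w)%:E + Emd nu (ec c f) <= ec c f g)%E.
Proof.
elim => {g w nu} /=.
- move=> s mu H f f0; rewrite (Emd_dirac (ec_ge0 _ _ f0) H) mulr0 add0e //.
- move=> r hr s mu H f f0; rewrite (Emd_dirac (ec_ge0 _ _ f0) H) //.
- move=> s mu H f f0; rewrite (Emd_dirac (ec_ge0 _ _ f0) H) mulr0 add0e //.
- move=> x d h1 h2 s mu H f f0; rewrite mulr0 add0e.
  rewrite (Emd_is _ H) /= (@esum_sig R _ (fun i => 0 < d s i) (fun i => (d s i)%:E * f (upd s x i))%E) //.
  move=> i; rewrite -leNgt => di; have -> : d s i = 0 by apply/eqP; rewrite eq_le di h1.
  by rewrite mul0e.
- move=> psi phi C D s mu hs H f f0; rewrite (Emd_dirac (ec_ge0 _ _ f0) H) mulr0 add0e /=.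
  by move: hs; rewrite /ind; case: (psi s) (phi s) => [] [] //= _; rewrite mul1e mul0e adde0.
- move=> psi phi C D s mu hs H f f0; rewrite (Emd_dirac (ec_ge0 _ _ f0) H) mulr0 add0e /=.
  by move: hs; rewrite /ind; case: (psi s) (phi s) => [] [] //= _; rewrite mul1e mul0e add0e.
- move=> psi phi C D s mu hs H f f0; rewrite (Emd_dirac (ec_ge0 _ _ f0) H) mulr0 add0e /=.
  by apply: adde_ge0; apply: mule_ge0; rewrite ?lee_fin ?ind_ge0 ?et_ge0.
- move=> psi phi C s mu hs H f f0; rewrite (Emd_dirac (ec_ge0 _ _ f0) H) mulr0 add0e /=.
  apply: le_trans (lfp_unfold _ s); last first.
    move=> F G F0 FG t; apply: leeD2r; apply: lee_wpmul2l; rewrite ?lee_fin ?ind_ge0 //.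
    exact: et_mono.
  by move: hs; rewrite /ind; case: (psi s) (phi s) => [] [] //= _; rewrite mul1e mul0e adde0.
- move=> psi phi C s mu hs H f f0; rewrite (Emd_dirac (ec_ge0 _ _ f0) H) mulr0 add0e /=.
  apply: le_trans (lfp_unfold _ s); last first.
    move=> F G F0 FG t; apply: leeD2r; apply: lee_wpmul2l; rewrite ?lee_fin ?ind_ge0 //.
    exact: et_mono.
  by move: hs; rewrite /ind; case: (psi s) (phi s) => [] [] //= _; rewrite mul1e mul0e add0e.
- move=> psi phi C s mu hs H f f0; rewrite (Emd_dirac (ec_ge0 _ _ f0) H) mulr0 add0e /=.
  exact: lfp_ge0.
- move=> C D s mu H f f0; rewrite (Emd_dirac (ec_ge0 _ _ f0) H) mulr0 add0e /= le_max lexx //.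
- move=> C D s mu H f f0; rewrite (Emd_dirac (ec_ge0 _ _ f0) H) mulr0 add0e /= le_max lexx orbT //.
- move=> C p D h s mu H f f0; rewrite mulr0 add0e.
  have p0 : 0 <= p by case/andP: h.
  have p1 : 0 <= 1 - p by case/andP: h => _; rewrite subr_ge0.
  rewrite (Emd_is _ H) /=.
  rewrite (@esum_sig R bool (fun b => 0 < if b then p else 1 - p)
     (fun b => (if b then p else 1 - p)%:E * et c (if b then C else D) f s)%E); last first.
    move=> b; rewrite -leNgt => hb.
    have -> : (if b then p else 1 - p) = 0 by apply/eqP; rewrite eq_le hb; case: (b).
    by rewrite mul0e.
  rewrite (esumID [set true]); last first.
    by move=> b _; apply: mule_ge0; [case: (b); rewrite lee_fin|apply: et_ge0].
  rewrite setTI (_ : [set: bool] `&` ~` [set true] = [set false]); last first.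
    by apply/seteqP; split => -[] //=; move=> [].
  rewrite !esum_set1 //=.
  - by apply: mule_ge0; [rewrite lee_fin|apply: et_ge0].
  - by apply: mule_ge0; [rewrite lee_fin|apply: et_ge0].
- move=> C D s r mu' mu _ IH H f f0.
  have := IH (et c D f) (et_ge0 _ _ f0) => /=; apply: le_trans.
  rewrite (Emd_is _ H) /Emd; apply: leeD2l; apply: le_esum => k _.
  by case: (mc k).
Qed.

End St.


Section LSt.
Variables (R : realType) (V : finType).
Local Notation expect := (expect R V).
Local Notation multidist := (multidist R V).

Lemma lstep_w_ge0 (mu : multidist) w nu : lstep mu w nu -> 0 <= w.
Proof.
elim => //.
- by move=> g w' mu' nu' _ /step_w_ge0.
- move=> J p mus nus ws w' mu' nu' _ IH hp _ hw _ _.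
  rewrite -lee_fin hw; apply: esum_ge0 => j _; rewrite lee_fin mulr_ge0 // ltW //.
Qed.

Lemma Emd_union (J : countType) (p : J -> R) (m : J -> multidist) (mu : multidist) g :
  (forall j, 0 < p j) -> (forall x, 0 <= g x)%E ->
  md_is mu (fun jk : {j : J & mI (m j)} => p (tag jk) * mq (tagged jk))
           (fun jk => mc (tagged jk)) ->
  Emd mu g = (\esum_(j in [set: J]) ((p j)%:E * Emd (m j) g))%E.
Proof.
move=> hp g0 H; rewrite (Emd_is _ H) esum_sigT; last first.
  by move=> k; apply: mule_ge0 => //; rewrite lee_fin mulr_ge0 // ltW // mq_gt0.
apply: eq_esum => j _; rewrite /Emd -esumZl.
- by apply: eq_esum => k _ /=; rewrite EFinM muleA.
- exact: ltW.
- by move=> k _; apply: mule_ge0 => //; rewrite lee_fin ltW // mq_gt0.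
Qed.

Lemma lstep_sound c (mu : multidist) w nu : lstep mu w nu ->
  forall f : expect, (forall s, 0 <= f s)%E ->
  ((@ind R c * w)%:E + Emd nu (ec c f) <= Emd mu (ec c f))%E.
Proof.
elim => {mu w nu}.
- by move=> mu f f0; rewrite mulr0 add0e.
- move=> g w mu nu H st f f0; rewrite (Emd_dirac (ec_ge0 _ _ f0) H).
  exact: step_sound.
- move=> J p mus nus ws w mu nu Hls IH hp hsum hw Hmu Hnu f f0.
  have ec0 := fun x => ec_ge0 c x f0.
  rewrite (Emd_union hp ec0 Hmu) (Emd_union hp ec0 Hnu) EFinM hw.
  have ws0 j : 0 <= ws j := lstep_w_ge0 (Hls j).
  rewrite -esumZl ?ind_ge0 //; last first.
    by move=> j _; rewrite lee_fin mulr_ge0 // ltW.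
  rewrite -esumD; last first.
  - by move=> j _; apply: mule_ge0; [rewrite lee_fin ltW|exact: Emd_ge0].
  - by move=> j _; apply: mule_ge0; rewrite lee_fin ?ind_ge0 // mulr_ge0 // ltW.
  apply: le_esum => j _.
  rewrite -EFinM mulrCA EFinM -ge0_muleDr; last first.
  - exact: Emd_ge0.
  - by rewrite lee_fin mulr_ge0 ?ind_ge0.
  apply: lee_wpmul2l; first by rewrite lee_fin ltW.
  exact: IH.
Qed.

End LSt.

Theorem mainTheorem4 (R : realType) (V : finType) (mu nu : multidist R V) (w : R)
  (f : store V -> \bar R) (c : bool) :
  (0 <= w)%R ->
  (forall s, (0 <= f s)%E) ->
  lstep mu w nu ->
  ((@ind R c * w)%:E + Emd nu (ec c f) <= Emd mu (ec c f))%E.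
Proof.
move=> _ f0 H; exact: (lstep_sound c H f0).
Qed.
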